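(* Let $W'$ and $W''$ be B-DMCs, and let $W^-=W'\boxminus W''$ and $W^+=W'\boxplus W''$. Then $$J(W^-)+J(W^+)\ \ge\ J(W')+J(W''),$$ and equality holds only if $J(W')\in\{0,1\}$ or $J(W'')\in\{0,1\}$.
   Context: A B-DMC $V$ is a channel with input alphabet $\{0,1\}$, a finite output alphabet $\mathcal Y$ and transition probabilities $V(y|x)$. With base-2 logarithms: $Z(V)=\sum_y\sqrt{V(y|0)V(y|1)}$ and $J(V)=\log\frac{2}{1+Z(V)}$. For B-DMCs $V':\{0,1\}\to\mathcal Y_1$ and $V'':\{0,1\}\to\mathcal Y_2$ define $V'\boxminus V'':\{0,1\}\to\mathcal Y_1\times\mathcal Y_2$ by $(V'\boxminus V'')(y_1,y_2|x_1)=\sum_{x_2\in\{0,1\}}\frac12V'(y_1|x_1\oplus x_2)V''(y_2|x_2)$, and $V'\boxplus V'':\{0,1\}\to\mathcal Y_1\times\mathcal Y_2\times\{0,1\}$ by $(V'\boxplus V'')(y_1,y_2,x_1|x_2)=\frac12V'(y_1|x_1\oplus x_2)V''(y_2|x_2)$. *)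

(* Defs.v *)
From Stdlib Require Import Reals List.
Import ListNotations.
Open Scope R_scope.

Definition rsum {Y : Type} (l : list Y) (f : Y -> R) : R :=
  fold_right (fun y acc => f y + acc) 0 l.

Definition log2 (x : R) : R := ln x / ln 2.

(* A B-DMC with input alphabet {0,1} (encoded as bool, 0 = false, 1 = true)
   and finite output alphabet Y, whose elements are enumerated exactly once by
   the list l.  V x y is the transition probability V(y|x). *)
Definition is_BDMC {Y : Type} (l : list Y) (V : bool -> Y -> R) : Prop :=
  NoDup l /\ (forall y : Y, In y l) /\
  (forall x y, 0 <= V x y) /\
  (forall x, rsum l (V x) = 1).

Definition Zb {Y : Type} (l : list Y) (V : bool -> Y -> R) : R :=
  rsum l (fun y => sqrt (V false y * V true y)).

Definition Jb {Y : Type} (l : list Y) (V : bool -> Y -> R) : R :=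
  log2 (2 / (1 + Zb l V)).

Definition bminus {Y1 Y2 : Type} (V' : bool -> Y1 -> R) (V'' : bool -> Y2 -> R)
  : bool -> Y1 * Y2 -> R :=
  fun x1 y => let (y1, y2) := y in
    rsum [false; true] (fun x2 => / 2 * V' (xorb x1 x2) y1 * V'' x2 y2).

Definition bplus {Y1 Y2 : Type} (V' : bool -> Y1 -> R) (V'' : bool -> Y2 -> R)
  : bool -> (Y1 * Y2) * bool -> R :=
  fun x2 y => let '(y1, y2, x1) := y in
    / 2 * V' (xorb x1 x2) y1 * V'' x2 y2.

Definition minus_out {Y1 Y2 : Type} (l1 : list Y1) (l2 : list Y2) : list (Y1 * Y2) :=
  list_prod l1 l2.
Definition plus_out {Y1 Y2 : Type} (l1 : list Y1) (l2 : list Y2)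
  : list ((Y1 * Y2) * bool) :=
  list_prod (list_prod l1 l2) [false; true].

(* Main.v *)
Require Import Defs.
From Stdlib Require Import Reals List Lra Psatz.
Open Scope R_scope.

Lemma rsum_nil {Y} (f : Y -> R) : rsum nil f = 0.
Proof. reflexivity. Qed.
Lemma rsum_cons {Y} (a : Y) l f : rsum (a :: l) f = f a + rsum l f.
Proof. reflexivity. Qed.

Lemma rsum_ext {Y} (l : list Y) f g : (forall y, f y = g y) -> rsum l f = rsum l g.
Proof. intro H; induction l; simpl; [auto| rewrite H, IHl; auto]. Qed.

Lemma rsum_le {Y} (l : list Y) f g : (forall y, f y <= g y) -> rsum l f <= rsum l g.
Proof. intro H; induction l; simpl; [lra| specialize (H a); lra]. Qed.

Lemma rsum_plus {Y} (l : list Y) f g : rsum l (fun y => f y + g y) = rsum l f + rsum l g.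
Proof. induction l; simpl; [lra| rewrite IHl; lra]. Qed.

Lemma rsum_mult_l {Y} (l : list Y) c f : rsum l (fun y => c * f y) = c * rsum l f.
Proof. induction l; simpl; [lra| rewrite IHl; lra]. Qed.

Lemma rsum_app {Y} (l1 l2 : list Y) f : rsum (l1 ++ l2) f = rsum l1 f + rsum l2 f.
Proof. induction l1; simpl; [lra| rewrite IHl1; lra]. Qed.

Lemma rsum_map {Y Z} (l : list Y) (h : Y -> Z) f : rsum (map h l) f = rsum l (fun y => f (h y)).
Proof. induction l; simpl; [lra| rewrite IHl; lra]. Qed.

Lemma rsum_prod {Y1 Y2} (l1 : list Y1) (l2 : list Y2) f :
  rsum (list_prod l1 l2) f = rsum l1 (fun a => rsum l2 (fun b => f (a, b))).
Proof. induction l1; simpl; [lra| rewrite rsum_app, rsum_map, IHl1; lra]. Qed.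

Lemma rsum_nonneg {Y} (l : list Y) f : (forall y, 0 <= f y) -> 0 <= rsum l f.
Proof. intro H; induction l; simpl; [lra| specialize (H a); lra]. Qed.

Lemma sqrt_sq_eq x : 0 <= x -> exists u, 0 <= u /\ x = u * u /\ sqrt x = u.
Proof. intro H; exists (sqrt x). split; [apply sqrt_pos|]. split; [|reflexivity]. symmetry; apply sqrt_sqrt; auto. Qed.

Lemma sqrt_prod_le p q : 0 <= p -> 0 <= q -> sqrt (p * q) <= (p + q) / 2.
Proof.
  intros Hp Hq.
  destruct (sqrt_sq_eq p Hp) as [u [Hu [-> _]]].
  destruct (sqrt_sq_eq q Hq) as [v [Hv [-> _]]].
  replace (u*u*(v*v)) with ((u*v)*(u*v)) by ring.
  rewrite sqrt_square by (apply Rmult_le_pos; auto). pose proof (Rle_0_sqr (u - v)); unfold Rsqr in *; lra.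
Qed.

Lemma Z_bounds {Y} (l : list Y) V : is_BDMC l V -> 0 <= Zb l V <= 1.
Proof.
  intros [_ [_ [Hp Hs]]]. unfold Zb. split.
  - apply rsum_nonneg; intro; apply sqrt_pos.
  - apply Rle_trans with (rsum l (fun y => /2 * V false y + /2 * V true y)).
    + apply rsum_le; intro y. pose proof (sqrt_prod_le _ _ (Hp false y) (Hp true y)); lra.
    + rewrite rsum_plus, !rsum_mult_l.
      change (rsum l (fun y => V false y)) with (rsum l (V false)).
      change (rsum l (fun y => V true y)) with (rsum l (V true)).
      rewrite !Hs; lra.
Qed.

Lemma minus_term P0 P1 Q0 Q1 : 0 <= P0 -> 0 <= P1 -> 0 <= Q0 -> 0 <= Q1 ->
  sqrt ((/2 * P0 * Q0 + (/2 * P1 * Q1 + 0)) * (/2 * P1 * Q0 + (/2 * P0 * Q1 + 0)))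
  <= /2 * (sqrt (P0 * P1) * (Q0 + Q1) + sqrt (Q0 * Q1) * (P0 + P1)
           - 2 * sqrt (P0 * P1) * sqrt (Q0 * Q1)).
Proof.
  intros H0 H1 H2 H3.
  destruct (sqrt_sq_eq P0 H0) as [u [Hu [-> _]]].
  destruct (sqrt_sq_eq P1 H1) as [v [Hv [-> _]]].
  destruct (sqrt_sq_eq Q0 H2) as [z [Hz [-> _]]].
  destruct (sqrt_sq_eq Q1 H3) as [w [Hw [-> _]]].
  replace (u*u*(v*v)) with ((u*v)*(u*v)) by ring.
  replace (z*z*(w*w)) with ((z*w)*(z*w)) by ring.
  rewrite (sqrt_square (u*v)) by nra. rewrite (sqrt_square (z*w)) by nra.
  remember (/2 * (u * v * (z * z + w * w) + z * w * (u * u + v * v) - 2 * (u * v) * (z * w))) as Rt eqn:HRt.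
  assert (HR : 0 <= Rt).
  { rewrite HRt. assert (0 <= u*v*((z-w)*(z-w))) by (apply Rmult_le_pos; [apply Rmult_le_pos; auto | apply Rle_0_sqr]).
    assert (0 <= z*w*(u*u+v*v)) by (apply Rmult_le_pos; nra). nra. }
  rewrite <- (sqrt_square Rt HR). apply sqrt_le_1_alt.
  assert (Hid : Rt * Rt - (/2 * (u * u) * (z * z) + (/2 * (v * v) * (w * w) + 0)) *
     (/2 * (v * v) * (z * z) + (/2 * (u * u) * (w * w) + 0))
     = /4 * (2 * (u*v*z*w) * ((u-v)*(u-v)) * ((z-w)*(z-w)))) by (rewrite HRt; field).
  assert (0 <= 2 * (u*v*z*w) * ((u-v)*(u-v)) * ((z-w)*(z-w))).
  { assert (0 <= u*v*z*w) by (repeat apply Rmult_le_pos; auto).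
    apply Rmult_le_pos; [apply Rmult_le_pos; [lra|apply Rle_0_sqr]|apply Rle_0_sqr]. }
  nra.
Qed.

Lemma plus_term P0 P1 Q0 Q1 : 0 <= P0 -> 0 <= P1 -> 0 <= Q0 -> 0 <= Q1 ->
  sqrt (/2 * P0 * Q0 * (/2 * P1 * Q1)) = /2 * (sqrt (P0 * P1) * sqrt (Q0 * Q1)) /\
  sqrt (/2 * P1 * Q0 * (/2 * P0 * Q1)) = /2 * (sqrt (P0 * P1) * sqrt (Q0 * Q1)).
Proof.
  intros H0 H1 H2 H3.
  destruct (sqrt_sq_eq P0 H0) as [u [Hu [-> _]]].
  destruct (sqrt_sq_eq P1 H1) as [v [Hv [-> _]]].
  destruct (sqrt_sq_eq Q0 H2) as [z [Hz [-> _]]].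
  destruct (sqrt_sq_eq Q1 H3) as [w [Hw [-> _]]].
  replace (u*u*(v*v)) with ((u*v)*(u*v)) by ring.
  replace (z*z*(w*w)) with ((z*w)*(z*w)) by ring.
  replace (/2 * (u*u) * (z*z) * (/2 * (v*v) * (w*w))) with ((/2*u*v*z*w)*(/2*u*v*z*w)) by ring.
  replace (/2 * (v*v) * (z*z) * (/2 * (u*u) * (w*w))) with ((/2*u*v*z*w)*(/2*u*v*z*w)) by ring.
  assert (0 <= /2*u*v*z*w).
  { repeat apply Rmult_le_pos; lra. }
  rewrite (sqrt_square (u*v)) by nra. rewrite (sqrt_square (z*w)) by nra.
  rewrite (sqrt_square (/2*u*v*z*w)) by nra. split; ring.
Qed.

Lemma Zplus_eq {Y1 Y2} (l1 : list Y1) (l2 : list Y2) W' W'' :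
  is_BDMC l1 W' -> is_BDMC l2 W'' ->
  Zb (plus_out l1 l2) (bplus W' W'') = Zb l1 W' * Zb l2 W''.
Proof.
  intros [_ [_ [Hp1 _]]] [_ [_ [Hp2 _]]].
  unfold Zb, plus_out. rewrite !rsum_prod.
  rewrite Rmult_comm, <- rsum_mult_l.
  apply rsum_ext; intro y1.
  rewrite Rmult_comm, <- rsum_mult_l.
  apply rsum_ext; intro y2. simpl.
  destruct (plus_term _ _ _ _ (Hp1 false y1) (Hp1 true y1) (Hp2 false y2) (Hp2 true y2)) as [E1 E2].
  rewrite E1, E2. lra.
Qed.

Lemma Zminus_le {Y1 Y2} (l1 : list Y1) (l2 : list Y2) W' W'' :
  is_BDMC l1 W' -> is_BDMC l2 W'' ->
  Zb (minus_out l1 l2) (bminus W' W'') <=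
  Zb l1 W' + Zb l2 W'' - Zb l1 W' * Zb l2 W''.
Proof.
  intros [_ [_ [Hp1 Hs1]]] [_ [_ [Hp2 Hs2]]].
  unfold Zb, minus_out. rewrite !rsum_prod.
  remember (rsum l1 (fun y => sqrt (W' false y * W' true y))) as a eqn:Ha.
  remember (rsum l2 (fun y => sqrt (W'' false y * W'' true y))) as b eqn:Hb.
  apply Rle_trans with (rsum l1 (fun y1 => rsum l2 (fun y2 =>
     /2 * (sqrt (W' false y1 * W' true y1) * (W'' false y2 + W'' true y2)
       + sqrt (W'' false y2 * W'' true y2) * (W' false y1 + W' true y1)
       - 2 * sqrt (W' false y1 * W' true y1) * sqrt (W'' false y2 * W'' true y2))))).
  - apply rsum_le; intro y1; apply rsum_le; intro y2. simpl.
    apply minus_term; auto.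
  - assert (S1 : forall x, rsum l1 (fun y => W' x y) = 1) by exact Hs1.
    assert (S2 : forall x, rsum l2 (fun y => W'' x y) = 1) by exact Hs2.
    right.
    rewrite (rsum_ext _ _ (fun y1 => (1 - b) * sqrt (W' false y1 * W' true y1)
                + (/2 * b * W' false y1 + /2 * b * W' true y1))).
    + rewrite !rsum_plus, !rsum_mult_l, !S1. rewrite <- Ha. lra.
    + intro y1.
      rewrite (rsum_ext _ _ (fun y2 => (/2 * sqrt (W' false y1 * W' true y1)) * W'' false y2
           + ((/2 * sqrt (W' false y1 * W' true y1)) * W'' true y2
           + (/2 * (W' false y1 + W' true y1) - sqrt (W' false y1 * W' true y1))
              * sqrt (W'' false y2 * W'' true y2)))).
      * rewrite !rsum_plus, !rsum_mult_l, !S2. rewrite <- Hb. lra.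
      * intro; lra.
Qed.

Lemma Jb_form {Y} (l : list Y) V : 0 <= Zb l V ->
  Jb l V = (ln 2 - ln (1 + Zb l V)) * / ln 2.
Proof.
  intro H. unfold Jb, log2, Rdiv.
  rewrite ln_mult by (try apply Rinv_0_lt_compat; lra).
  rewrite ln_Rinv by lra. ring.
Qed.

Lemma ln2_pos : 0 < ln 2.
Proof. pose proof ln_lt_2; lra. Qed.

Lemma J_at_0 {Y} (l : list Y) V : Zb l V = 0 -> Jb l V = 1.
Proof. intro H. unfold Jb, log2. rewrite H. replace (2/(1+0)) with 2 by field.
  field. pose proof ln2_pos; lra. Qed.

Lemma J_at_1 {Y} (l : list Y) V : Zb l V = 1 -> Jb l V = 0.
Proof. intro H. unfold Jb, log2. rewrite H. replace (2/(1+1)) with 1 by field.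
  rewrite ln_1. unfold Rdiv; ring. Qed.

Theorem proposition1 (Y1 Y2 : Type) (l1 : list Y1) (l2 : list Y2)
  (W' : bool -> Y1 -> R) (W'' : bool -> Y2 -> R)
  (H1 : is_BDMC l1 W') (H2 : is_BDMC l2 W'') :
  Jb (minus_out l1 l2) (bminus W' W'') + Jb (plus_out l1 l2) (bplus W' W'')
    >= Jb l1 W' + Jb l2 W''
  /\
  (Jb (minus_out l1 l2) (bminus W' W'') + Jb (plus_out l1 l2) (bplus W' W'')
     = Jb l1 W' + Jb l2 W'' ->
   (Jb l1 W' = 0 \/ Jb l1 W' = 1) \/ (Jb l2 W'' = 0 \/ Jb l2 W'' = 1)).
Proof.
  pose proof (Z_bounds _ _ H1) as Ba.
  pose proof (Z_bounds _ _ H2) as Bb.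
  pose proof (Zplus_eq _ _ _ _ H1 H2) as Ep.
  pose proof (Zminus_le _ _ _ _ H1 H2) as Lm.
  assert (Am : 0 <= Zb (minus_out l1 l2) (bminus W' W'')).
  { unfold Zb; apply rsum_nonneg; intro; apply sqrt_pos. }
  assert (Ap : 0 <= Zb (plus_out l1 l2) (bplus W' W'')).
  { unfold Zb; apply rsum_nonneg; intro; apply sqrt_pos. }
  rewrite (Jb_form _ _ Am), (Jb_form _ _ Ap), (Jb_form l1 W'), (Jb_form l2 W'') by lra.
  revert Ep Lm Am Ap.
  generalize (Zb (minus_out l1 l2) (bminus W' W'')) as A.
  generalize (Zb (plus_out l1 l2) (bplus W' W'')) as B.
  revert Ba Bb.
  generalize (Zb l1 W') as a. generalize (Zb l2 W'') as b.
  intros b a Ba Bb B A -> Lm Am Ap.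
  pose proof ln2_pos as L2.
  assert (Hi : 0 < / ln 2) by (apply Rinv_0_lt_compat; lra).
  assert (Key : (1 + A) * (1 + a * b) <= (1 + a) * (1 + b)).
  { assert (0 <= a*b*((1-a)*(1-b))) by (apply Rmult_le_pos; nra). nra. }
  assert (Lk : ln (1 + A) + ln (1 + a * b) <= ln (1 + a) + ln (1 + b)).
  { rewrite <- !ln_mult by nra.
    destruct Key as [K|K]; [left; apply ln_increasing; nra | right; rewrite K; auto]. }
  split.
  - apply Rle_ge. nra.
  - intro E.
    assert (E2 : ln (1 + A) + ln (1 + a * b) = ln (1 + a) + ln (1 + b)).
    { apply (Rmult_eq_reg_r (/ ln 2)); [|lra]. nra. }
    rewrite <- !ln_mult in E2 by nra.
    apply ln_inv in E2; [|nra|nra].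
    assert (Z0 : a * b * ((1 - a) * (1 - b)) = 0).
    { assert (0 <= a*b*((1-a)*(1-b))) by (apply Rmult_le_pos; nra). nra. }
    apply Rmult_integral in Z0. destruct Z0 as [Z0|Z0];
      apply Rmult_integral in Z0; destruct Z0 as [Z0|Z0].
    + left; right. subst a. rewrite Rplus_0_r, ln_1. field; lra.
    + right; right. subst b. rewrite Rplus_0_r, ln_1. field; lra.
    + left; left. replace (1 + a) with 2 by lra. replace (ln 2 - ln 2) with 0 by lra. lra.
    + right; left. replace (1 + b) with 2 by lra. replace (ln 2 - ln 2) with 0 by lra. lra.
Qed.
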